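(* For all integers $m \geq 0$ and $n \geq 1$, \[ \sum_{k=0}^{n-1}\binom{m+k}{m}\binom{-n}{k}\binom{-n}{n-1-k} = \sum_{k=0}^{m}\binom{m}{k}\binom{-n}{k}\binom{-2n-k}{n-1-k}. \]
   Context: For a complex number $\alpha$ and an integer $k \geq 0$, $\binom{\alpha}{k} = \frac{\alpha(\alpha-1)\cdots(\alpha-k+1)}{k!}$ (equal to $1$ for $k=0$), and $\binom{\alpha}{k} = 0$ for integers $k < 0$. *)

(* Defs.v *)
From mathcomp Require Import all_boot all_order all_algebra.
Set Implicit Arguments. Unset Strict Implicit. Unset Printing Implicit Defensive.
Import Order.TTheory GRing.Theory Num.Theory.
Local Open Scope ring_scope.

Definition gbinom (a : rat) (k : int) : rat :=
  match k with
  | Posz k' => (\prod_(i < k') (a - i%:R)) / (k'`!)%:R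
  | Negz _ => 0
  end.

(* Main.v *)
Require Import Defs.
From mathcomp Require Import all_boot all_order all_algebra.
From mathcomp Require Import zify ring.
Import Order.TTheory GRing.Theory Num.Theory.


Lemma vdm m k : 'C(m+k,m) = \sum_(j < m.+1) 'C(m,j) * 'C(k,j).
Proof.
rewrite -binomial.Vandermonde (reindex_inj rev_ord_inj) /=.
apply: eq_bigr => j _; rewrite subKn; last by rewrite -ltnS.
by rewrite bin_sub // -ltnS.
Qed.

Lemma trin N k j : 'C(N+k,k) * 'C(k,j) = 'C(N+k,N+j) * 'C(N+j,j).
Proof.
case: (leqP j k) => hjk; last first.
  by rewrite (bin_small hjk) muln0 (@bin_small (N+k)) // ltn_add2l.
apply/eqP; rewrite -(eqn_pmul2r (fact_gt0 N)) -(eqn_pmul2r (fact_gt0 j))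
  -(eqn_pmul2r (fact_gt0 (k-j))); apply/eqP.
have h1 := bin_fact (leq_addl N k). rewrite addnK in h1.
have h2 := bin_fact hjk.
have h3 : N + j <= N + k by rewrite leq_add2l.
have h4 := bin_fact h3. rewrite subnDl in h4.
have h5 := bin_fact (leq_addl N j). rewrite addnK in h5.
transitivity (N+k)`!.
  rewrite -h1 -h2; ring.
rewrite -h4 -h5; ring.
Qed.

Lemma upv p q r : \sum_(k < q.+1) 'C(k,p) * 'C(q-k,r) = 'C(q.+1, p+r+1).
Proof.
elim: q r => [|q IH] r.
  rewrite big_ord_recr big_ord0 /= sub0n add0n.
  case: p => [|p]; case: r => [|r] => //=.
  all: rewrite ?bin0n /= ?muln0 ?addn1 ?addnS //.
rewrite big_ord_recr /= subnn.
case: r => [|r].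
  have e : forall q a, \sum_(k < q) 'C(k,p) * 'C(a-k,0) = \sum_(k < q) 'C(k,p).
    by move=> q' a; apply: eq_bigr => k _; rewrite bin0 muln1.
  rewrite e; have := IH 0; rewrite e => ->.
  by rewrite !addn0 addn1 [in RHS]binS bin0 muln1 addnC.
rewrite bin0n /= muln0 addn0.
have e : forall k : 'I_q.+1, 'C(k,p) * 'C(q.+1-k,r.+1) = 'C(k,p)*'C(q-k,r) + 'C(k,p)*'C(q-k,r.+1).
  move=> k; have hk : k <= q by rewrite -ltnS.
  rewrite subSn //.
  by rewrite binS mulnDr addnC.
rewrite (eq_bigr _ (fun k _ => e k)) big_split /= !IH.
by rewrite !addn1 !addnS binS addnC.
Qed.

Lemma stepD N j : \sum_(k < N.+1) 'C(N+k,N+j) * 'C(N+N-k,N-k)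
  = if j <= N then 'C(3*N+1, N-j) else 0.
Proof.
case: leqP => hj; last first.
  by rewrite big1 // => k _; rewrite bin_small ?mul0n // ltn_add2l (leq_ltn_trans _ hj) // -ltnS.
have := upv (N+j) (3*N) N.
have -> : 'C((3 * N).+1, N + j + N + 1) = 'C(3*N+1, N-j).
  rewrite -[RHS]bin_sub; last by lia.
  congr binomial; lia.
move <-; symmetry.
rewrite -(big_mkord xpredT (fun k => 'C(k, N+j) * 'C(3*N-k, N))).
rewrite (big_cat_nat _ (n:=N)) //=; last by lia.
rewrite big1_seq /=; last first.
  move=> k; rewrite mem_index_iota => /andP [_ hk].
  by rewrite bin_small ?mul0n //; lia.
rewrite add0n (big_cat_nat _ (n:=N+N.+1)) /=; [|lia|lia].
rewrite [X in _ + X]big1_seq /=; last first.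
  move=> k; rewrite /= mem_index_iota => /andP [hk hk2].
  rewrite (@bin_small (3*N-k)) ?muln0 //; lia.
rewrite addn0 -{1}[N]add0n big_addn addKn big_mkord.
apply: eq_bigr => k _.
have hk : k <= N by rewrite -ltnS.
rewrite (addnC k N).
have -> : 3*N - (N+k) = N+N-k by lia.
have -> : N - k = (N+N-k) - N by lia.
rewrite bin_sub //; lia.
Qed.

Lemma natid m N : \sum_(k < N.+1) 'C(m+k,m) * 'C(N+k,k) * 'C(N+N-k,N-k)
  = \sum_(k < m.+1) 'C(m,k) * 'C(N+k,k) * (if k <= N then 'C(3*N+1, N-k) else 0).
Proof.
under eq_bigr => k _ do rewrite vdm !big_distrl /=.
rewrite exchange_big /=.
apply: eq_bigr => j _.
rewrite -stepD big_distrr /=.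
apply: eq_bigr => k _.
rewrite -(mulnA 'C(m,j) 'C(k,j)) (mulnC 'C(k,j)) trin; ring.
Qed.

Local Open Scope ring_scope.

Lemma gb_neg x (z : int) : (z < 0)%R -> gbinom x z = 0.
Proof. by case: z. Qed.

Lemma gbS x k : gbinom x (Posz k.+1) * k.+1%:R = gbinom x (Posz k) * (x - k%:R).
Proof.
rewrite /gbinom big_ord_recr /= factS natrM.
have h1 : (k.+1%:R : rat) != 0 by rewrite pnatr_eq0.
have h2 : ((k`!)%:R : rat) != 0 by rewrite pnatr_eq0 -lt0n fact_gt0.
by field; rewrite h2 nat1r h1.
Qed.

Lemma gb_nat (a k : nat) : gbinom a%:R (Posz k) = ('C(a,k))%:R.
Proof.
elim: k => [|k IH].
  by rewrite /gbinom big_ord0 bin0 divr1.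
have h1 : (k.+1%:R : rat) != 0 by rewrite pnatr_eq0.
apply: (mulIf h1); rewrite gbS IH -natrM mulnC mul_bin_left natrM mulrC.
case: (leqP k a) => hk; first by rewrite natrB.
by rewrite bin_small // !(mulr0, mul0r, muln0, mul0n).
Qed.

Lemma gb_refl x k : gbinom (- x) (Posz k) = (-1) ^+ k * gbinom (x + k%:R - 1) (Posz k).
Proof.
rewrite /gbinom mulrA; congr (_ / _).
have -> : \prod_(i < k) (- x - i%:R) = \prod_(i < k) - (x + i%:R).
  by apply: eq_bigr => i _; rewrite opprD.
rewrite prodrN card_ord; congr (_ * _).
rewrite (reindex_inj rev_ord_inj) /=; apply: eq_bigr => i _.
rewrite natrB // -addn1 natrD; ring.
Qed.

Lemma rnat (x y : nat) : (x.+1%:R + y%:R - 1 : rat) = (x + y)%:R.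
Proof. rewrite natrD -addn1 natrD; ring. Qed.

Theorem lemma5 (m n : nat) (hn : (1 <= n)%N) :
  \sum_(0 <= k < n)
     gbinom (m + k)%N%:R (Posz m) * gbinom (- n%:R) (Posz k)
       * gbinom (- n%:R) (n%:Z - 1 - k%:Z)
  = \sum_(0 <= k < m.+1)
     gbinom m%:R (Posz k) * gbinom (- n%:R) (Posz k)
       * gbinom (- (2 * n)%N%:R - k%:R) (n%:Z - 1 - k%:Z).
Proof.
case: n hn => [//|N] _.
have sg : forall k, (k <= N)%N -> ((-1) ^+ k * (-1) ^+ (N - k) : rat) = (-1) ^+ N.
  by move=> k hk; rewrite -exprD subnKC.
rewrite !big_mkord.
transitivity ((-1) ^+ N * (\sum_(k < N.+1) 'C(m+k,m) * 'C(N+k,k) * 'C(N+N-k,N-k))%N%:R : rat).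
  rewrite natr_sum big_distrr; apply: eq_bigr => k _.
  have hk : (k <= N)%N by rewrite -ltnS.
  have -> : (N.+1%:Z - 1 - k%:Z) = Posz (N - k)%N by lia.
  rewrite gb_nat !gb_refl !rnat gb_nat !gb_nat addnBA // -(sg k hk) !natrM /=; ring.
rewrite natid natr_sum big_distrr; apply: eq_bigr => k _.
case: (leqP k N) => hk.
  have -> : (N.+1%:Z - 1 - k%:Z) = Posz (N - k)%N by lia.
  have -> : (- (2 * N.+1)%N%:R - k%:R : rat) = - ((2 * N + 1 + k).+1)%:R.
    by rewrite -opprD -natrD; congr (- _%:R); lia.
  rewrite gb_nat !gb_refl !rnat !gb_nat -(sg k hk) !natrM.
  have -> : (2 * N + 1 + k + (N - k) = 3 * N + 1)%N by lia.
  rewrite /=; ring.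
rewrite (@gb_neg _ (N.+1%:Z - 1 - k%:Z)) /= ?muln0 ?mulr0 //; lia.
Qed.
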